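(* Let $H$ be a complex separable Hilbert space and let $\mathcal{G}$ be a countable group of unitary operators on $H$. Let $M$ and $K$ be wandering subspaces of $H$ for $\mathcal{G}$. If $\sum_{g \in \mathcal{G}} \oplus^{\perp} g(M) \subseteq \sum_{g \in \mathcal{G}} \oplus^{\perp} g(K)$, then $\dim(M) \le \dim(K)$.
   Context: A closed linear subspace $M$ of $H$ is a wandering subspace for a set $\mathcal{U}$ of unitary operators (containing the identity) if $U(M) \perp V(M)$ for all $U, V \in \mathcal{U}$ with $U \neq V$. For a wandering subspace $M$, $\sum_{g \in \mathcal{G}} \oplus^{\perp} g(M)$ denotes the closed orthogonal direct sum of the mutually orthogonal subspaces $g(M)$, $g \in \mathcal{G}$. *)

(* Defs.v *)
From HB Require Import structures.
From mathcomp Require Import all_boot all_order all_algebra.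
From mathcomp Require Import boolp classical_sets cardinality reals.
From mathcomp Require Import complex.
Set Implicit Arguments. Unset Strict Implicit. Unset Printing Implicit Defensive.
Import Order.TTheory GRing.Theory Num.Theory.
Local Open Scope ring_scope.
Local Open Scope classical_set_scope.
Local Open Scope complex_scope.

Section Hilbert.
Variables (R : realType) (V : lmodType R[i]) (ip : V -> V -> R[i]).

Definition is_inner_product : Prop :=
  [/\ forall (a : R[i]) (x y z : V), ip (a *: x + y) z = a * ip x z + ip y z,
      forall x y : V, ip y x = (ip x y)^*,
      forall x : V, 0 <= ip x x
    & forall x : V, ip x x = 0 -> x = 0].

Definition hnorm (x : V) : R := Num.sqrt (complex.Re (ip x x)).

Definition converges_to (u : nat -> V) (x : V) : Prop :=
  forall eps : R, 0 < eps -> exists N : nat, forall n, (N <= n)%N -> hnorm (u n - x) < eps.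

Definition cauchy_seq (u : nat -> V) : Prop :=
  forall eps : R, 0 < eps -> exists N : nat,
    forall m n, (N <= m)%N -> (N <= n)%N -> hnorm (u m - u n) < eps.

Definition hcomplete : Prop :=
  forall u : nat -> V, cauchy_seq u -> exists x, converges_to u x.

Definition hseparable : Prop :=
  exists D : set V, countable D /\
    forall x (eps : R), 0 < eps -> exists2 d, D d & hnorm (x - d) < eps.

Definition separable_hilbert : Prop :=
  [/\ is_inner_product, hcomplete & hseparable].

Definition lin_subspace (M : set V) : Prop :=
  [/\ M 0, forall x y, M x -> M y -> M (x + y)
    & forall (a : R[i]) x, M x -> M (a *: x)].

Definition norm_closed (M : set V) : Prop :=
  forall (u : nat -> V) x, (forall n, M (u n)) -> converges_to u x -> M x.

Definition closed_subspace (M : set V) : Prop := lin_subspace M /\ norm_closed M.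

Definition closed_span (A : set V) : set V :=
  [set x | forall S, closed_subspace S -> A `<=` S -> S x].

Definition unitary (U : V -> V) : Prop :=
  [/\ linear U, forall x y, ip (U x) (U y) = ip x y & forall y, exists x, U x = y].

Definition unitary_group (G : set (V -> V)) : Prop :=
  [/\ forall U, G U -> unitary U,
      G id,
      forall U W, G U -> G W -> G (U \o W)
    & forall U, G U -> exists2 W, G W & (U \o W = id /\ W \o U = id)].

Definition orth (A B : set V) : Prop := forall x y, A x -> B y -> ip x y = 0.

Definition wandering (G : set (V -> V)) (M : set V) : Prop :=
  closed_subspace M /\
  forall U W, G U -> G W -> U <> W -> orth (U @` M) (W @` M).

Definition orth_sum (G : set (V -> V)) (M : set V) : set V :=
  closed_span (\bigcup_(g in G) (g @` M)).

Definition orthonormal (B : set V) : Prop :=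
  (forall b, B b -> ip b b = 1) /\ (forall b c, B b -> B c -> b <> c -> ip b c = 0).

Definition orthonormal_basis (M B : set V) : Prop :=
  [/\ B `<=` M, orthonormal B & closed_span B = M].

(* dim(M) <= dim(K): Hilbert dimension = cardinality of an orthonormal basis *)
Definition hdim_le (M K : set V) : Prop :=
  forall BM BK, orthonormal_basis M BM -> orthonormal_basis K BK -> (BM #<= BK)%card.

End Hilbert.

(* Main.v *)
Require Import Defs.
From HB Require Import structures.
From mathcomp Require Import all_boot all_order all_algebra.
From mathcomp Require Import boolp classical_sets cardinality reals.
From mathcomp Require Import complex.
From mathcomp Require Import ring lra finmap.
Set Implicit Arguments. Unset Strict Implicit. Unset Printing Implicit Defensive.
Import Order.TTheory GRing.Theory Num.Theory.
Local Open Scope ring_scope.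
Local Open Scope classical_set_scope.
Local Open Scope complex_scope.


Definition nrm (R : realType) (V : lmodType R[i]) (ip : V -> V -> R[i]) (x : V) : R :=
  complex.Re (ip x x).
Definition sq (R : realType) (z : R[i]) : R := complex.Re (z * z^*).

Lemma sq_ge0 (R : realType) (z : R[i]) : 0 <= sq z.
Proof. by have := mulcJ_ge0 z; rewrite lecE => /andP[_]. Qed.

Lemma sqJ (R : realType) (z : R[i]) : sq (z^*) = sq z.
Proof. case: z => a b; rewrite /sq /=; ring. Qed.

Lemma sqM (R : realType) (a z : R[i]) : sq (a * z) = sq a * sq z.
Proof.
case: a => a b; case: z => c d; rewrite /sq /=. ring.
Qed.

Lemma Re_real (R : realType) (z : R[i]) : 0 <= z -> z = (complex.Re z)%:C.
Proof. by move=> /ger0_Im; case: z => a b /= ->. Qed.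

Section IP.
Context (R : realType) (V : lmodType R[i]) (ip : V -> V -> R[i]).
Hypothesis Hip : is_inner_product ip.

Lemma ipDl x y z : ip (x + y) z = ip x z + ip y z.
Proof. by case: Hip => H _ _ _; have := H 1 x y z; rewrite scale1r mul1r. Qed.

Lemma ip0l z : ip 0 z = 0.
Proof.
have := ipDl 0 0 z; rewrite addr0 => /eqP; rewrite -subr_eq0 opprD addrA subrr add0r oppr_eq0.
by move/eqP.
Qed.

Lemma ipZl a x z : ip (a *: x) z = a * ip x z.
Proof. by case: Hip => H _ _ _; have := H a x 0 z; rewrite addr0 ip0l addr0. Qed.

Lemma ipNl x z : ip (- x) z = - ip x z.
Proof. by rewrite -scaleN1r ipZl mulN1r. Qed.

Lemma ipBl x y z : ip (x - y) z = ip x z - ip y z.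
Proof. by rewrite ipDl ipNl. Qed.

Lemma ipC x y : ip y x = (ip x y)^*.
Proof. by case: Hip. Qed.

Lemma ipDr x y z : ip z (x + y) = ip z x + ip z y.
Proof. by rewrite (ipC (x + y)) ipDl (ipC x) (ipC y) rmorphD. Qed.

Lemma ipZr a x z : ip z (a *: x) = a^* * ip z x.
Proof. by rewrite (ipC (a *: x)) ipZl (ipC x) rmorphM. Qed.

Lemma ipNr x z : ip z (- x) = - ip z x.
Proof. by rewrite -scaleN1r ipZr rmorphN rmorph1 mulN1r. Qed.

Lemma ipBr x y z : ip z (x - y) = ip z x - ip z y.
Proof. by rewrite ipDr ipNr. Qed.

Lemma ip0r z : ip z 0 = 0.
Proof. by rewrite -(scale0r 0) ipZr rmorph0 mul0r. Qed.

Lemma ip_ge0 x : 0 <= ip x x.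
Proof. by case: Hip. Qed.

Lemma nrm_ge0 x : 0 <= nrm ip x.
Proof. by have := ip_ge0 x; rewrite lecE => /andP[]. Qed.

Lemma ipxx x : ip x x = (nrm ip x)%:C.
Proof. exact: Re_real (ip_ge0 x). Qed.

Lemma ip_suml (I : Type) (s : seq I) (a : I -> R[i]) (w : I -> V) z :
  ip (\sum_(i <- s) a i *: w i) z = \sum_(i <- s) a i * ip (w i) z.
Proof.
elim: s => [|i s IH]; first by rewrite !big_nil ip0l.
by rewrite !big_cons ipDl ipZl IH.
Qed.

Lemma ip_sumr (I : Type) (s : seq I) (a : I -> R[i]) (w : I -> V) z :
  ip z (\sum_(i <- s) a i *: w i) = \sum_(i <- s) (a i)^* * ip z (w i).
Proof.
elim: s => [|i s IH]; first by rewrite !big_nil ip0r.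
by rewrite !big_cons ipDr ipZr IH.
Qed.

Lemma nrm_para x y : nrm ip (x + y) <= 2 * nrm ip x + 2 * nrm ip y.
Proof.
have E : ip (x + y) (x + y) + ip (x - y) (x - y) = 2%:R * ip x x + 2%:R * ip y y.
  by rewrite ipDl !ipBl !ipDr ?ipBr ?ipNr; ring.
have H : nrm ip (x + y) + nrm ip (x - y) = 2 * nrm ip x + 2 * nrm ip y.
  move: E; rewrite !ipxx -rmorphD -(rmorph_nat (real_complex R)) -!rmorphM -rmorphD.
  by move/complexI.
have := nrm_ge0 (x - y); rewrite -H; lra.
Qed.


Lemma sum_delta (I : eqType) (s : seq I) (F : I -> R[i]) i :
  uniq s -> i \in s -> \sum_(j <- s) F j * (i == j)%:R = F i.
Proof.
move=> us iS; rewrite (bigD1_seq i) //= eqxx mulr1 big1 ?addr0 //.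
by move=> j; rewrite eq_sym => /negbTE ->; rewrite mulr0.
Qed.

Lemma approx_id (I : eqType) (s : seq I) (w : I -> V) (d : I -> R[i]) x :
  uniq s -> (forall i j, i \in s -> j \in s -> ip (w i) (w j) = (i == j)%:R) ->
  ip (x - \sum_(i <- s) d i *: w i) (x - \sum_(i <- s) d i *: w i) =
  ip x x - \sum_(i <- s) ip x (w i) * (ip x (w i))^*
  + \sum_(i <- s) (ip x (w i) - d i) * (ip x (w i) - d i)^*.
Proof.
move=> us ON; set y := \sum_(i <- s) _.
have yy : ip y y = \sum_(i <- s) d i * (d i)^*.
  rewrite /y ip_suml big_seq_cond [RHS]big_seq_cond; apply: eq_bigr => i /andP[iS _].
  rewrite ip_sumr; congr (_ * _).
  rewrite (eq_big_seq (fun j => (d j)^* * (i == j)%:R)); first exact: sum_delta.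
  by move=> j js; rewrite ON.
have xy : ip x y = \sum_(i <- s) (d i)^* * ip x (w i) by rewrite /y ip_sumr.
have yx : ip y x = \sum_(i <- s) d i * (ip x (w i))^*.
  by rewrite /y ip_suml; apply: eq_bigr => i _; rewrite (ipC x).
rewrite !ipBl !ipBr yy xy yx.
have -> : \sum_(i <- s) (ip x (w i) - d i) * (ip x (w i) - d i)^* =
   \sum_(i <- s) ip x (w i) * (ip x (w i))^* - \sum_(i <- s) (d i)^* * ip x (w i)
   - \sum_(i <- s) d i * (ip x (w i))^* + \sum_(i <- s) d i * (d i)^*.
  rewrite -!sumrN -!big_split /=; apply: eq_bigr => i _; rewrite rmorphB; ring.
ring.
Qed.


Lemma approx_idR (I : eqType) (s : seq I) (w : I -> V) (d : I -> R[i]) x :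
  uniq s -> (forall i j, i \in s -> j \in s -> ip (w i) (w j) = (i == j)%:R) ->
  nrm ip (x - \sum_(i <- s) d i *: w i) =
  nrm ip x - \sum_(i <- s) sq (ip x (w i)) + \sum_(i <- s) sq (ip x (w i) - d i).
Proof.
move=> us ON; rewrite /nrm approx_id // raddfD raddfB /= !raddf_sum.
by [].
Qed.

Lemma approx_le (I : eqType) (s : seq I) (w : I -> V) (d : I -> R[i]) x :
  uniq s -> (forall i j, i \in s -> j \in s -> ip (w i) (w j) = (i == j)%:R) ->
  nrm ip x - \sum_(i <- s) sq (ip x (w i)) <= nrm ip (x - \sum_(i <- s) d i *: w i).
Proof.
move=> us ON; rewrite approx_idR // lerDl; apply: sumr_ge0 => i _; exact: sq_ge0.
Qed.

Lemma bessel (I : eqType) (s : seq I) (w : I -> V) x :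
  uniq s -> (forall i j, i \in s -> j \in s -> ip (w i) (w j) = (i == j)%:R) ->
  \sum_(i <- s) sq (ip x (w i)) <= nrm ip x.
Proof.
move=> us ON; have := nrm_ge0 (x - \sum_(i <- s) ip x (w i) *: w i).
rewrite approx_idR // [X in _ + X]big1 ?addr0 ?subr_ge0 // => i _.
by rewrite subrr /sq mul0r.
Qed.


Lemma sum_pred1 (T : eqType) (t : seq T) (a : T) (g : T -> V) :
  uniq t -> a \in t -> \sum_(u <- t | u == a) g u = g a.
Proof.
by move=> ut at_; rewrite -big_filter (filter_pred1_uniq ut at_) big_seq1.
Qed.

Definition Lspan (F : set V) (y : V) :=
  exists s : seq (R[i] * V), (forall p, p \in s -> F p.2) /\ y = \sum_(p <- s) p.1 *: p.2.

Lemma Lspan_uniq F y : Lspan F y -> exists (t : seq V) (d : V -> R[i]),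
  [/\ uniq t, (forall u, u \in t -> F u) & y = \sum_(u <- t) d u *: u].
Proof.
move=> [s [sF ->]].
exists (undup (map snd s)), (fun u => \sum_(p <- s | p.2 == u) p.1); split.
- exact: undup_uniq.
- by move=> u; rewrite mem_undup => /mapP[p ps ->]; apply: sF.
rewrite (eq_bigr (fun u => \sum_(p <- s) (if p.2 == u then p.1 *: p.2 else 0))); last first.
  move=> u _; rewrite scaler_suml big_mkcond; apply: eq_bigr => p _.
  by case: eqP => [->|].
rewrite exchange_big /= big_seq [RHS]big_seq; apply: eq_bigr => p ps.
rewrite -big_mkcond /=.
rewrite (eq_bigl (fun u => u == p.2)); last by move=> u; rewrite eq_sym.
rewrite (sum_pred1 (fun _ => p.1 *: p.2)) ?undup_uniq //.
by rewrite mem_undup; apply/mapP; exists p.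
Qed.

Lemma pad_sum (t U : seq V) (d : V -> R[i]) : uniq t -> uniq U -> {subset t <= U} ->
  \sum_(u <- t) d u *: u = \sum_(u <- U) (if u \in t then d u else 0) *: u.
Proof.
move=> ut uU tU.
rewrite [RHS](eq_bigr (fun u => if u \in t then d u *: u else 0)); last first.
  by move=> u _; case: ifP => _ //; rewrite scale0r.
rewrite -big_mkcond -big_filter; apply: perm_big.
apply: uniq_perm => //; first exact: filter_uniq.
move=> u; rewrite mem_filter; case ut': (u \in t) => //=; by rewrite (tU _ ut').
Qed.

Definition Tset (F : set V) (x : V) :=
  forall e : R, 0 < e -> exists2 y, Lspan F y & nrm ip (x - y) < e.

Definition ONset (F : set V) := forall u v, F u -> F v -> ip u v = (u == v)%:R.

Lemma Tset_approx F x : ONset F -> Tset F x -> forall e : R, 0 < e ->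
  exists2 U0 : seq V, (forall u, u \in U0 -> F u) &
   forall U : seq V, uniq U -> (forall u, u \in U -> F u) -> {subset U0 <= U} ->
     nrm ip x - \sum_(u <- U) sq (ip x u) < e.
Proof.
move=> ONF Tx e e0; have [y /Lspan_uniq [t [d [ut tF ->]]] lt] := Tx e e0.
exists t => // U uU UF tU.
rewrite (pad_sum d ut uU tU) in lt.
apply: le_lt_trans lt.
apply: (approx_le (w := fun u => u)) => // u v uU' vU'; exact: ONF (UF _ uU') (UF _ vU').
Qed.


Lemma nrm0 : nrm ip 0 = 0.
Proof. by rewrite /nrm ip0l. Qed.

Lemma nrmN x : nrm ip (- x) = nrm ip x.
Proof. by rewrite /nrm ipNl ipNr opprK. Qed.

Lemma nrmZ a x : nrm ip (a *: x) = sq a * nrm ip x.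
Proof.
rewrite /nrm ipZl ipZr ipxx /sq; move: (nrm ip x) => r.
by case: a => p q /=; ring.
Qed.

Lemma nrmD4 x y e : nrm ip x < e / 4 -> nrm ip y < e / 4 -> nrm ip (x + y) < e.
Proof. by move=> hx hy; apply: le_lt_trans (nrm_para x y) _; lra. Qed.

Lemma Lspan0 F : Lspan F 0.
Proof. by exists [::]; split => //; rewrite big_nil. Qed.

Lemma LspanD F y1 y2 : Lspan F y1 -> Lspan F y2 -> Lspan F (y1 + y2).
Proof.
move=> [s1 [h1 ->]] [s2 [h2 ->]]; exists (s1 ++ s2); split; last by rewrite big_cat.
by move=> p; rewrite mem_cat => /orP[/h1|/h2].
Qed.

Lemma LspanZ F a y : Lspan F y -> Lspan F (a *: y).
Proof.
move=> [s [h ->]]; exists (map (fun p => (a * p.1, p.2)) s); split.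
  move=> p /mapP[q qs ->] /=. exact: h.
by rewrite big_map scaler_sumr; apply: eq_bigr => p _; rewrite scalerA.
Qed.

Lemma Lspan1 (F : set V) u : F u -> Lspan F u.
Proof.
move=> Fu; exists [:: (1, u)]; split; first by move=> p; rewrite inE => /eqP ->.
by rewrite big_seq1 scale1r.
Qed.

Lemma Tset_closed F : closed_subspace ip (Tset F).
Proof.
split; first split.
- move=> e e0; exists 0; first exact: Lspan0.
  by rewrite subr0 nrm0.
- move=> x y Tx Ty e e0.
  have e4 : 0 < e / 4 by lra.
  have [y1 L1 h1] := Tx _ e4; have [y2 L2 h2] := Ty _ e4.
  exists (y1 + y2); first exact: LspanD.
  have -> : x + y - (y1 + y2) = (x - y1) + (y - y2) by rewrite opprD addrACA.
  exact: nrmD4.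
- move=> a x Tx e e0.
  have c0 : 0 < sq a + 1 by have := sq_ge0 a; lra.
  have [y L h] := Tx (e / (sq a + 1)) (divr_gt0 e0 c0).
  exists (a *: y); first exact: LspanZ.
  rewrite -scalerBr nrmZ; move: h; rewrite ltr_pdivlMr //.
  have := sq_ge0 a; have := nrm_ge0 (x - y); nra.
- move=> u x Tu cv e e0.
  have e4 : 0 < e / 4 by lra.
  have [N HN] := cv (Num.sqrt (e / 4)) (ltac:(by rewrite sqrtr_gt0)).
  have := HN N (leqnn N); rewrite /hnorm ltr_sqrt // => hN.
  have [y L h] := Tu N _ e4.
  exists y => //.
  have -> : x - y = - (u N - x) + (u N - y) by rewrite opprB addrA subrK.
  by apply: nrmD4 => //; rewrite nrmN.
Qed.

End IP.


Section Lin.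
Context (R : realType) (V : lmodType R[i]) (g : V -> V).
Hypothesis Hl : linear g.
Lemma linD x y : g (x + y) = g x + g y.
Proof. by have := Hl 1 x y; rewrite !scale1r. Qed.
Lemma lin0 : g 0 = 0.
Proof.
have := linD 0 0; rewrite addr0 => /eqP; rewrite -subr_eq0 opprD addrA subrr add0r oppr_eq0.
by move/eqP.
Qed.
Lemma linZ a x : g (a *: x) = a *: g x.
Proof. by have := Hl a x 0; rewrite !addr0 lin0 addr0. Qed.
Lemma linN x : g (- x) = - g x.
Proof. by rewrite -scaleN1r linZ scaleN1r. Qed.
Lemma linB x y : g (x - y) = g x - g y.
Proof. by rewrite linD linN. Qed.
End Lin.


Lemma sum_partition (R : realType) (T1 T2 : eqType) (U : seq T1) (B : seq T2)
   (h : T1 -> T2) (X : T1 -> R) : uniq B -> (forall u, u \in U -> h u \in B) ->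
  \sum_(u <- U) X u = \sum_(f <- B) \sum_(u <- U | h u == f) X u.
Proof.
move=> uB hB.
rewrite [RHS](eq_bigr (fun f => \sum_(u <- U) (if h u == f then X u else 0))); last first.
  by move=> f _; rewrite big_mkcond.
rewrite exchange_big /= big_seq [RHS]big_seq; apply: eq_bigr => u uU.
rewrite -big_mkcond /= (eq_bigl (fun f => f == h u)); last by move=> f; rewrite eq_sym.
by rewrite -big_filter (filter_pred1_uniq uB (hB _ uU)) big_seq1.
Qed.

Lemma sum_const_seq (R : realType) (T : Type) (A : seq T) (c : R) :
  \sum_(e <- A) c = (size A)%:R * c.
Proof.
elim: A => [|a A IH]; first by rewrite big_nil mul0r.
by rewrite big_cons IH /= -addn1 natrD; ring.
Qed.

Section Main.
Context (R : realType) (V : lmodType R[i]) (ip : V -> V -> R[i]).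
Hypothesis Hip : is_inner_product ip.
Context (G : set (V -> V)) (M K BM BK : set V).
Hypothesis GU : forall U, G U -> unitary ip U.
Hypothesis Gid : G id.
Hypothesis Ginv : forall U, G U -> exists2 W, G W & (U \o W = id /\ W \o U = id).
Hypothesis wM : wandering ip G M.
Hypothesis wK : wandering ip G K.
Hypothesis Hsub : orth_sum ip G M `<=` orth_sum ip G K.
Hypothesis oBM : orthonormal_basis ip M BM.
Hypothesis oBK : orthonormal_basis ip K BK.

Definition Fam := [set v | exists g f, [/\ G g, BK f & v = g f]].

Lemma ON_of (B0 : set V) : Defs.orthonormal ip B0 ->
  forall u v, B0 u -> B0 v -> ip u v = (u == v)%:R.
Proof.
move=> [h1 h2] u v Bu Bv; case: eqP => [<-|/eqP nuv]; first by rewrite h1.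
by rewrite h2 //; apply/eqP.
Qed.

Lemma ONF : ONset ip Fam.
Proof.
move=> u v [g [f [Gg BKf ->]]] [g' [f' [Gg' BKf' ->]]].
case: oBK => sBK oB _.
have [Hl Hu _] := GU Gg.
case: eqP => [<-|neq]; first by rewrite Hu (ON_of oB) // eqxx.
have [Egg|ngg] := pselect (g = g').
  subst g'; rewrite Hu (ON_of oB) //.
  by case: eqP => // Eff; exfalso; apply: neq; rewrite Eff.
case: wK => _ /(_ g g' Gg Gg' ngg); apply; first by exists f => //; apply: sBK.
by exists f' => //; apply: sBK.
Qed.


Lemma span_sub (A S : set V) : closed_subspace ip S -> A `<=` S -> closed_span ip A `<=` S.
Proof. by move=> cS AS x /(_ S cS AS). Qed.

Lemma Lspan_T x : Lspan Fam x -> Tset ip Fam x.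
Proof. by move=> Lx e e0; exists x => //; rewrite subrr nrm0. Qed.

Lemma Tset_pre g : G g -> closed_subspace ip [set z | Tset ip Fam (g z)].
Proof.
move=> Gg; have [Hl Hu _] := GU Gg.
have [[T0 TD TZ] Tc] := Tset_closed Hip Fam.
split; first split => /=.
- by rewrite lin0.
- by move=> x y Tx Ty; rewrite linD //; apply: TD.
- by move=> a x Tx; rewrite linZ //; apply: TZ.
move=> u x Tu cv; apply: (Tc (fun n => g (u n))) => // e e0.
have [N HN] := cv e e0; exists N => n Nn.
by rewrite /hnorm -linB // Hu; apply: HN.
Qed.

Lemma K_T g k : G g -> K k -> Tset ip Fam (g k).
Proof.
move=> Gg Kk; case: oBK => _ _ E; rewrite -E in Kk.
apply: (span_sub (Tset_pre Gg)) Kk => f BKf /=.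
by apply/Lspan_T/Lspan1; exists g, f.
Qed.

Lemma BM_T e : BM e -> Tset ip Fam e.
Proof.
move=> BMe; case: oBM => sBM _ _.
have : orth_sum ip G K e.
  apply: Hsub => S cS sub; apply: sub; exists id => //; exists e => //; exact: sBM.
apply: span_sub; first exact: Tset_closed.
by move=> _ [g Gg [k Kk <-]]; apply: K_T.
Qed.


Lemma nrm_BM e : BM e -> nrm ip e = 1.
Proof.
move=> BMe; case: oBM => _ [h1 _] _; by rewrite /nrm h1.
Qed.

Lemma nrm_BK e : BK e -> nrm ip e = 1.
Proof.
move=> BMe; case: oBK => _ [h1 _] _; by rewrite /nrm h1.
Qed.

Lemma lower_bound (A : seq V) (eps : R) : 0 < eps -> (forall e, e \in A -> BM e) ->
  exists2 U : seq V, uniq U /\ (forall u, u \in U -> Fam u) &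
    (size A)%:R * (1 - eps) <= \sum_(e <- A) \sum_(u <- U) sq (ip e u).
Proof.
move=> eps0 AB.
have hU0 : forall e, exists U0 : seq V, BM e ->
   (forall u, u \in U0 -> Fam u) /\ forall U, uniq U -> (forall u, u \in U -> Fam u) ->
     {subset U0 <= U} -> nrm ip e - \sum_(u <- U) sq (ip e u) < eps.
  move=> e; have [BMe|nBMe] := pselect (BM e); last by exists [::].
  have [U0 h1 h2] := Tset_approx Hip ONF (BM_T BMe) eps0.
  by exists U0 => _; split.
have [U0f HU0] := choice hU0.
exists (undup (flatten (map U0f A))); first split.
- exact: undup_uniq.
- move=> u; rewrite mem_undup => /flattenP [t /mapP [e eA ->] ut].
  by have [h _] := HU0 e (AB _ eA); apply: h.
rewrite -sum_const_seq big_seq [X in _ <= X]big_seq; apply: ler_sum => e eA.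
have [h1 h2] := HU0 e (AB _ eA).
have := h2 (undup (flatten (map U0f A))) (undup_uniq _) _ _.
rewrite (nrm_BM (AB _ eA)) => H; apply/ltW; rewrite ltrBlDr -ltrBlDl; apply: H.
  move=> u; rewrite mem_undup => /flattenP [t /mapP [e' e'A ->] ut].
  by have [h _] := HU0 e' (AB _ e'A); apply: h.
move=> u uU; rewrite mem_undup; apply/flattenP; exists (U0f e) => //.
by apply/mapP; exists e.
Qed.


Lemma upper_bound (A B U : seq V) : uniq A -> uniq B -> uniq U ->
  (forall e, e \in A -> BM e) -> (forall f, BK f -> f \in B) -> (forall f, f \in B -> BK f) ->
  (forall u, u \in U -> Fam u) ->
  \sum_(e <- A) \sum_(u <- U) sq (ip e u) <= (size B)%:R.
Proof.
move=> uA uB uU AM BKB BBK UF.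
have hch : forall v, exists t : (V -> V) * V * (V -> V), Fam v ->
   [/\ G t.1.1, BK t.1.2, v = t.1.1 t.1.2, G t.2 & t.1.1 \o t.2 = id /\ t.2 \o t.1.1 = id].
  move=> v; have [[g [f [Gg BKf ->]]]|nF] := pselect (Fam v); last first.
    by exists (id, 0, id).
  have [W GW WW] := Ginv Gg; by exists (g, f, W).
have [ch Hch] := choice hch.
rewrite exchange_big /=.
rewrite (@sum_partition R V V U B (fun u => (ch u).1.2) _ uB); last first.
  by move=> u uU'; apply: BKB; have [_ ? _ _ _] := Hch u (UF _ uU').
rewrite -[(size B)%:R]mulr1 -sum_const_seq big_seq [X in _ <= X]big_seq.
apply: ler_sum => f fB.
rewrite -big_filter.
set Uf := filter _ U.
have UfP : forall u, u \in Uf -> [/\ G (ch u).1.1, u = (ch u).1.1 f, G (ch u).2 &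
    (ch u).1.1 \o (ch u).2 = id /\ (ch u).2 \o (ch u).1.1 = id].
  move=> u; rewrite mem_filter => /andP [/eqP hf uU'].
  by have [? ? Eu ? ?] := Hch u (UF _ uU'); rewrite -hf.
pose w := fun p : V * V => (ch p.1).2 p.2.
have -> : \sum_(u <- Uf) \sum_(e <- A) sq (ip e u) =
   \sum_(p <- [seq (u, e) | u <- Uf, e <- A]) sq (ip f (w p)).
  rewrite big_allpairs big_seq [RHS]big_seq; apply: eq_bigr => u uUf.
  apply: eq_bigr => e _; rewrite /w /=.
  have [Gg Eu GW [gW Wg]] := UfP u uUf.
  have [_ HW _] := GU GW.
  rewrite {1}Eu -HW -[(ch u).2 ((ch u).1.1 f)]/(((ch u).2 \o (ch u).1.1) f) Wg /=.
  by rewrite (ipC Hip f) sqJ.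
rewrite -(nrm_BK (BBK _ fB)); apply: bessel => //.
  apply: allpairs_uniq => //; first exact: filter_uniq.
  by move=> [? ?] [? ?].
move=> p q /allpairsP [[u e] [/= uUf eA ->]] /allpairsP [[u' e'] [/= uUf' eA' ->]].
rewrite /w /=.
have [Gg Eu GW [gW Wg]] := UfP u uUf.
have [Gg' Eu' GW' [gW' Wg']] := UfP u' uUf'.
have [_ HW _] := GU GW.
case: oBM => sBM oB _.
have [Euu|nuu] := eqVneq u u'.
  subst u'; rewrite HW (ON_of oB); try by apply: AM.
  case: (e =P e') => [->|ne]; first by rewrite !eqxx.
  by case: eqP => // -[].
have -> : ((u, e) == (u', e')) = false.
  by apply/negbTE/eqP => -[E _]; move/eqP: nuu.
have nWW : (ch u).2 <> (ch u').2.
  move=> EW; move/eqP: nuu; apply; rewrite Eu Eu'; congr (_ f).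
  apply: funext => z.
  have := congr1 (fun h => h ((ch u').1.1 z)) gW; rewrite /= EW.
  by rewrite -[(ch u').2 ((ch u').1.1 z)]/(((ch u').2 \o (ch u').1.1) z) Wg'.
case: wM => _ /(_ _ _ GW GW' nWW); apply.
  by exists e => //; apply: sBM; apply: AM.
by exists e' => //; apply: sBM; apply: AM.
Qed.


Lemma finite_ineq (A B : seq V) : uniq A -> uniq B ->
  (forall e, e \in A -> BM e) -> (forall f, BK f -> f \in B) -> (forall f, f \in B -> BK f) ->
  (size A <= size B)%N.
Proof.
move=> uA uB AM BKB BBK; rewrite leqNgt; apply/negP => lt.
have t0 : 0 < (size A)%:R + 1 :> R by rewrite ltr_wpDl.
pose eps : R := ((size A)%:R + 1)^-1.
have eps0 : 0 < eps by rewrite invr_gt0.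
have epsE : eps * ((size A)%:R + 1) = 1 by rewrite mulVf // gt_eqF.
have [U [uU UF] lb] := lower_bound eps0 AM.
have ub := upper_bound uA uB uU AM BKB BBK UF.
have H := le_trans lb ub.
have : (size B).+1%:R <= (size A)%:R :> R by rewrite ler_nat.
rewrite -natr1; move: H epsE eps0; move: (size A)%:R (size B)%:R => a b; nra.
Qed.

End Main.


Lemma ONB_countable (R : realType) (V : lmodType R[i]) (ip : V -> V -> R[i]) (BM : set V) :
  is_inner_product ip -> hseparable ip -> Defs.orthonormal ip BM -> countable BM.
Proof.
move=> Hip [D [cD dense]] oB.
have q0 : 0 < (1 / 4 : R) by lra.
have s0 : 0 < Num.sqrt (1 / 4 : R) by rewrite sqrtr_gt0.
have hc : forall b, exists d, BM b -> D d /\ hnorm ip (b - d) < Num.sqrt (1 / 4).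
  move=> b; have [d Dd hd] := dense b _ s0; by exists d.
have [phi Hphi] := choice hc.
have /countable_injP [h hinj] := cD.
apply/countable_injP; exists (h \o phi) => b c /set_mem bB /set_mem cB /= E.
have [Db hb] := Hphi b bB; have [Dc hc'] := Hphi c cB.
have Ephi : phi b = phi c by apply: hinj => //; apply: mem_set.
move: hb hc'; rewrite /hnorm !ltr_sqrt // => hb hc'.
apply/eqP; apply/negP => /negP nbc.
have n2 : nrm ip (b - c) = 2.
  rewrite /nrm !(ipBl Hip) !(ipBr Hip) !(ON_of oB) // eqxx (negbTE nbc) eq_sym (negbTE nbc).
  by rewrite !subr0 sub0r opprK eqxx.
have : nrm ip (b - c) < 1.
  have -> : b - c = (b - phi b) + - (c - phi c) by rewrite Ephi opprB addrA subrK.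
  by apply: (nrmD4 Hip); rewrite ?(nrmN Hip); lra.
by rewrite n2; lra.
Qed.

Theorem lemma2p1 (R : realType) (V : lmodType R[i]) (ip : V -> V -> R[i])
    (G : set (V -> V)) (M K : set V) :
  separable_hilbert ip ->
  unitary_group ip G -> countable G ->
  wandering ip G M -> wandering ip G K ->
  orth_sum ip G M `<=` orth_sum ip G K ->
  hdim_le ip M K.
Proof.
move=> [Hip _ Hsep] [GU Gid _ Ginv] _ wM wK Hsub BM BK oBM oBK.
have FI := finite_ineq Hip GU Gid Ginv wM wK Hsub oBM oBK.
have [finK|infK] := pselect (finite_set BK); last first.
  apply: (@card_le_trans _ _ _ [set: nat]).
    by apply: ONB_countable Hip Hsep _; case: oBM.
  by apply/infiniteP.
have [n BKn] := finK.
have memB := in_fset_set finK.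
have szB : size (fset_set BK) = n := card_fset_set BKn.
have BKB : forall f, BK f -> f \in fset_set BK by move=> f /mem_set; rewrite memB.
have BBK : forall f, f \in fset_set BK -> BK f by move=> f; rewrite memB => /set_mem.
have [finM|infM] := pselect (finite_set BM); last first.
  have [A sA szA] := infinite_set_fset n.+1 infM.
  have := FI A (fset_set BK) (fset_uniq _) (fset_uniq _) (fun e eA => sA e eA) BKB BBK.
  by rewrite szB leqNgt szA.
have [m BMm] := finM.
have memA := in_fset_set finM.
have szA : size (fset_set BM) = m := card_fset_set BMm.
have := FI (fset_set BM) (fset_set BK) (fset_uniq _) (fset_uniq _) _ BKB BBK.
rewrite szA szB => le_mn.
  rewrite (card_le_eql BMm) (card_le_eqr BKn) card_le_II.
by apply: le_mn => e; rewrite memA => /set_mem.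
Qed.
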